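(* Let $V_1,\dots,V_{15}$ be the orbits of $L$ on $V(G_{E_8})$. For each $i$, choose a vector $w_i\in\Psi_{E_8}$ with $v_{w_i}\in V_i$. For $x\in\Psi_{E_8}$ let $P_x=\frac{1}{\|x\|^2}xx^*\in M_8(\mathbb{C})$ be the rank-one projection onto $\mathbb{C}x$. For $v_y,v_z\in V_i$ choose $M_{yz}=M_1\otimes M_2\otimes M_3$ with $M_k\in\{I,X,Y,Z\}$ such that $M_{yz}y=\pm z$ (which exists since $v_y,v_z$ lie in the same $L$-orbit), and set $u^{(i)}_{v_yv_z}:=M_{yz}P_{w_i}M_{yz}^*=P_{M_{yz}w_i}$. Let $u$ be the $120\times120$ matrix with entries in $M_8(\mathbb{C})$ that is block diagonal with respect to the partition $V_1,\dots,V_{15}$, with diagonal blocks $u^{(i)}=(u^{(i)}_{v_yv_z})_{v_y,v_z\in V_i}$ and all other entries $0$. Then $u$ is a quantum permutation matrix.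
   Context: The $E_8$ root system $\Psi_{E_8}\subset\mathbb{R}^8$ consists of the 240 vectors $\pm e_i\pm e_j$ ($1\le i<j\le 8$) and all $x\in\{\pm1\}^8$ with $\prod_i x_i=1$. $G_{E_8}$ is the graph with vertices $v_x$, $x\in\Psi_{E_8}$, where $v_x=v_{-x}$, and $v_x\sim v_y$ iff $\langle x,y\rangle=0$. Let $I=\mathrm{diag}(1,1)$, $X=\begin{pmatrix}0&1\\1&0\end{pmatrix}$, $Z=\mathrm{diag}(1,-1)$, $Y=XZ$. For $M=M_1\otimes M_2\otimes M_3$ with $M_i\in\{I,X,Y,Z\}$, $\sigma_M:v_x\mapsto v_{Mx}$ is an automorphism of $G_{E_8}$ and $L=\{\sigma_M\}\cong\mathbb{Z}_2^6$; $L$ has 15 orbits on $V(G_{E_8})$, each of size 8. A quantum permutation matrix (magic unitary) over a unital $C^*$-algebra $\mathcal{A}$ is a matrix $u=(u_{ij})\in M_n(\mathcal{A})$ whose entries are projections ($u_{ij}=u_{ij}^*=u_{ij}^2$) with $\sum_k u_{ik}=1_{\mathcal{A}}=\sum_k u_{ki}$ for all $i$. Here $\mathcal{A}=M_8(\mathbb{C})$. *)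

(* Defs.v *)
From HB Require Import structures.
From mathcomp Require Import all_boot all_order all_algebra.
From mathcomp Require Import algC.
From mathcomp Require Import mxtens.
Set Implicit Arguments. Unset Strict Implicit. Unset Printing Implicit Defensive.
Import Order.TTheory GRing.Theory Num.Theory.
Local Open Scope ring_scope.

(* Vectors of R^8 (inside C^8), as column vectors over algC. *)
Definition vec := 'cV[algC]_8.
Definition e8 (i : 'I_8) : vec := delta_mx i 0.
Definition sgn (b : bool) : algC := (-1) ^+ b.

(* The E_8 root system: the vectors +-e_i +- e_j (i<j) and the x in {+-1}^8
   with product of coordinates equal to 1. *)
Definition Psi_E8 : seq vec :=
  [seq sgn st.1 *: e8 p.1 + sgn st.2 *: e8 p.2
     | p <- filter (fun p : 'I_8 * 'I_8 => (p.1 < p.2)%N) (enum {: 'I_8 * 'I_8}),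
       st <- enum {: bool * bool}]
  ++ map (fun f : {ffun 'I_8 -> bool} => \col_k sgn (f k))
       (filter (fun f : {ffun 'I_8 -> bool} => \prod_k sgn (f k) == 1)
          (enum {: {ffun 'I_8 -> bool}})).

Definition e8root := seq_sub Psi_E8.

(* the vertex v_x = v_{-x}, represented as the set {x, -x} *)
Definition vset (x : e8root) : {set e8root} :=
  [set y : e8root | (val y == val x) || (val y == - val x)].
Definition is_vertex (A : {set e8root}) : bool := [exists x : e8root, A == vset x].
Definition vertex := {A : {set e8root} | is_vertex A}.
Lemma vset_is_vertex (x : e8root) : is_vertex (vset x).
Proof. by apply/existsP; exists x. Qed.
Definition vtx (x : e8root) : vertex := exist _ (vset x) (vset_is_vertex x).

Inductive pauli := pI | pX | pY | pZ.
Definition matX : 'M[algC]_2 := \matrix_(i, j) (if i == j then 0 else 1).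
Definition matZ : 'M[algC]_2 :=
  \matrix_(i, j) (if i == j then (if i == 0 then 1 else -1) else 0).
Definition pmat (p : pauli) : 'M[algC]_2 :=
  match p with pI => 1%:M | pX => matX | pY => matX *m matZ | pZ => matZ end.

Definition Lmat (t : (pauli * pauli * pauli)%type) : 'M[algC]_8 :=
  pmat t.1.1 *t (pmat t.1.2 *t pmat t.2).

Definition Lmaps (t : (pauli * pauli * pauli)%type) (a b : vertex) : Prop :=
  exists y z : e8root, vtx y = a /\ vtx z = b /\
    (Lmat t *m val y = val z \/ Lmat t *m val y = - val z).

Definition same_orbit (a b : vertex) : Prop := exists t, Lmaps t a b.

Definition adj {m n} (A : 'M[algC]_(m, n)) : 'M[algC]_(n, m) := (map_mx Num.conj A)^T.

Definition Pproj (x : vec) : 'M[algC]_8 :=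
  (\sum_i `|x i 0| ^+ 2)^-1 *: (x *m adj x).

Definition is_projection (p : 'M[algC]_8) : Prop := adj p = p /\ p *m p = p.
Definition magic_unitary (I : finType) (u : I -> I -> 'M[algC]_8) : Prop :=
  (forall i j, is_projection (u i j)) /\
  (forall i, \sum_k u i k = 1%:M) /\ (forall i, \sum_k u k i = 1%:M).

(* Main.v *)
Require Import Defs.
From HB Require Import structures.
From mathcomp Require Import all_boot all_order all_algebra.
From mathcomp Require Import algC.
From mathcomp Require Import mxtens.
From Stdlib Require Import ClassicalEpsilon.
Import GRing.Theory Num.Theory.
Local Open Scope ring_scope.


Definition p2o (p : pauli) : 'I_4 :=
  match p with pI => @Ordinal 4 0 isT | pX => @Ordinal 4 1 isT
  | pY => @Ordinal 4 2 isT | pZ => @Ordinal 4 3 isT end.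
Definition o2p (i : 'I_4) : pauli :=
  match val i with 0 => pI | 1 => pX | 2 => pY | _ => pZ end.
Lemma p2oK : cancel p2o o2p. Proof. by case. Qed.
HB.instance Definition _ := Finite.copy pauli (can_type p2oK).

Definition tcode := (pauli * pauli * pauli)%type.
Definition plist := [:: pI; pX; pY; pZ].
Definition tlist : seq tcode :=
  [seq (pq, r) | pq <- [seq (p, q) | p <- plist, q <- plist], r <- plist].

Lemma tlist_perm : perm_eq (enum {: tcode}) tlist.
Proof.
apply: uniq_perm; first exact: enum_uniq.
  by vm_compute.
by move=> [[p q] r]; rewrite mem_enum; case: p; case: q; case: r; vm_compute.
Qed.

Lemma sum_tcode (V : nmodType) (F : tcode -> V) :
  \sum_(t : tcode) F t = \sum_(t <- tlist) F t.
Proof. by rewrite -(perm_big _ tlist_perm) big_enum. Qed.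

Lemma card_tcode (P : pred tcode) : #|P| = count P tlist.
Proof. by rewrite -(permP tlist_perm) enumT cardE /enum_mem size_filter. Qed.


Definition pZn (p : pauli) (a b : nat) : int :=
  match p with
  | pI => if a == b then 1 else 0
  | pX => if a == b then 0 else 1
  | pY => if a == b then 0 else (if b == 0%N then 1 else -1)
  | pZ => if a == b then (if a == 0%N then 1 else -1) else 0
  end.
Definition LZn (t : tcode) (i k : nat) : int :=
  pZn t.1.1 (i %/ 4) (k %/ 4) * (pZn t.1.2 ((i %% 4) %/ 2) ((k %% 4) %/ 2)
    * pZn t.2 ((i %% 4) %% 2) ((k %% 4) %% 2)).

Lemma pmat_E p (a b : 'I_2) : pmat p a b = (pZn p a b)%:~R.
Proof.
case: a => [[|[|//]] ?]; case: b => [[|[|//]] ?]; case: p;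
  rewrite /pmat /matX /matZ ?mxE //= ?big_ord_recr ?big_ord0 /= !mxE /=;
  by rewrite ?(mul0r, mulr0, mul1r, mulr1, add0r, addr0).
Qed.

Lemma Lmat_E t (i k : 'I_8) : Lmat t i k = (LZn t i k)%:~R.
Proof.
by rewrite /Lmat /tensmx !mxE !pmat_E /LZn !rmorphM.
Qed.


Lemma conj_int (z : int) : Num.conj (z%:~R : algC) = z%:~R.
Proof. by rewrite rmorph_int. Qed.
Lemma posz_R (n : nat) : ((n%:Z)%:~R : algC) = n%:R.
Proof. by rewrite pmulrn. Qed.

Definition sum8 (g : nat -> int) : int := foldr (fun k a => g k + a) 0 (iota 0 8).
Lemma big_foldr_nat (s : seq nat) (g : nat -> int) :
  \sum_(k <- s) g k = foldr (fun k a => g k + a) 0 s.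
Proof. by elim: s => [|x s IH]; rewrite ?big_nil ?big_cons ?IH. Qed.
Lemma sum_ord8 (g : nat -> int) : \sum_(k < 8) ((g k)%:~R : algC) = (sum8 g)%:~R.
Proof. by rewrite -(big_mkord (fun _ => true) (fun k => ((g k)%:~R : algC))) /sum8 -big_foldr_nat rmorph_sum. Qed.

Lemma tmem t : t \in tlist.
Proof. by rewrite -(perm_mem tlist_perm) mem_enum. Qed.
Lemma imem (i : 'I_8) : (i : nat) \in iota 0 8.
Proof. by rewrite mem_iota ltn_ord. Qed.

Definition chk_orth : bool := all (fun t => all (fun i => all (fun j =>
  sum8 (fun k => LZn t k i * LZn t k j) == (i == j)%:Z) (iota 0 8)) (iota 0 8)) tlist.
Lemma chk_orth_ok : chk_orth. Proof. by vm_compute. Qed.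

Lemma adj_Lmat t : adj (Lmat t) = (Lmat t)^T.
Proof.
rewrite /adj.
have -> : map_mx Num.conj (Lmat t) = Lmat t.
  by apply/matrixP=> i j; rewrite mxE Lmat_E conj_int -Lmat_E.
by [].
Qed.

Lemma Lmat_tK t : adj (Lmat t) *m Lmat t = 1%:M.
Proof.
apply/matrixP=> i j; rewrite !mxE.
under eq_bigr => k _ do rewrite adj_Lmat [_^T _ _]mxE !Lmat_E -rmorphM.
rewrite (sum_ord8 (fun k => LZn t k i * LZn t k j)).
have := chk_orth_ok; move/allP/(_ t (tmem t))/allP/(_ i (imem i))/allP/(_ j (imem j))/eqP ->.
by rewrite posz_R.
Qed.

Lemma Lmat_Kt t : Lmat t *m adj (Lmat t) = 1%:M.
Proof. exact/mulmx1C/Lmat_tK. Qed.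

Lemma Lmat_mulE s t (i j : 'I_8) :
  (Lmat s *m Lmat t) i j = (sum8 (fun k => LZn s i k * LZn t k j))%:~R.
Proof.
rewrite mxE. under eq_bigr => k _ do rewrite !Lmat_E -rmorphM.
by rewrite (sum_ord8 (fun k => LZn s i k * LZn t k j)).
Qed.

Definition chk_comm : bool := all (fun s => all (fun t =>
  all (fun i => all (fun j => sum8 (fun k => LZn s i k * LZn t k j) ==
        sum8 (fun k => LZn t i k * LZn s k j)) (iota 0 8)) (iota 0 8) ||
  all (fun i => all (fun j => sum8 (fun k => LZn s i k * LZn t k j) ==
        - sum8 (fun k => LZn t i k * LZn s k j)) (iota 0 8)) (iota 0 8)) tlist) tlist.
Lemma chk_comm_ok : chk_comm. Proof. by vm_compute. Qed.

Definition chk_sq : bool := all (fun t =>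
  all (fun i => all (fun j => sum8 (fun k => LZn t i k * LZn t k j) == (i == j)%:Z) (iota 0 8)) (iota 0 8) ||
  all (fun i => all (fun j => sum8 (fun k => LZn t i k * LZn t k j) == - (i == j)%:Z) (iota 0 8)) (iota 0 8)) tlist.
Lemma chk_sq_ok : chk_sq. Proof. by vm_compute. Qed.

Lemma Lmat_comm s t : Lmat s *m Lmat t = Lmat t *m Lmat s \/
  Lmat s *m Lmat t = - (Lmat t *m Lmat s).
Proof.
have := chk_comm_ok; move/allP/(_ s (tmem s))/allP/(_ t (tmem t)).
case/orP=> H; [left|right]; apply/matrixP=> i j.
  rewrite !Lmat_mulE;
  by move/allP: H => /(_ i (imem i))/allP/(_ j (imem j))/eqP ->.
rewrite [RHS]mxE !Lmat_mulE;
by move/allP: H => /(_ i (imem i))/allP/(_ j (imem j))/eqP ->; rewrite rmorphN.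
Qed.

Lemma Lmat_sq t : Lmat t *m Lmat t = 1%:M \/ Lmat t *m Lmat t = - 1%:M.
Proof.
have := chk_sq_ok; move/allP/(_ t (tmem t)).
case/orP=> H; [left|right];
  apply/matrixP=> i j; rewrite Lmat_mulE !mxE;
  move/allP: H => /(_ i (imem i))/allP/(_ j (imem j))/eqP ->;
  by rewrite ?rmorphN.
Qed.


Definition pm (x y : vec) : Prop := x = y \/ x = - y.
Lemma pm_refl x : pm x x. Proof. by left. Qed.
Lemma pm_sym x y : pm x y -> pm y x.
Proof. move=> [->|->]; first by left. by right; rewrite opprK. Qed.
Lemma pm_trans x y z : pm x y -> pm y z -> pm x z.
Proof.
move=> [->|->] [->|->]; rewrite ?opprK; first [by left | by right].
Qed.
Lemma pm_opp x y : pm x y -> pm x (- y).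
Proof. move=> [->|->]; first by right; rewrite opprK. by left. Qed.
Lemma pm_mul (A : 'M[algC]_8) x y : pm x y -> pm (A *m x) (A *m y).
Proof. move=> [->|->]; first by left. by right; rewrite mulmxN. Qed.

Lemma Lmat_commv s t (x : vec) :
  pm (Lmat s *m (Lmat t *m x)) (Lmat t *m (Lmat s *m x)).
Proof.
rewrite !mulmxA; case: (Lmat_comm s t) => ->; [left|right]; by rewrite ?mulNmx.
Qed.

Lemma Lmat_sqv t (x : vec) : pm (Lmat t *m (Lmat t *m x)) x.
Proof.
rewrite mulmxA; case: (Lmat_sq t) => ->; [left|right]; by rewrite ?mulNmx mul1mx.
Qed.

Lemma adj_mul m n p (A : 'M[algC]_(m, n)) (B : 'M[algC]_(n, p)) :
  adj (A *m B) = adj B *m adj A.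
Proof. by rewrite /adj map_mxM trmx_mul. Qed.
Lemma adjK m n (A : 'M[algC]_(m, n)) : adj (adj A) = A.
Proof. by apply/matrixP=> i j; rewrite /adj !mxE conjCK. Qed.
Lemma adjN m n (A : 'M[algC]_(m, n)) : adj (- A) = - adj A.
Proof. by apply/matrixP=> i j; rewrite /adj !mxE rmorphN. Qed.
Lemma adjZ m n c (A : 'M[algC]_(m, n)) : adj (c *: A) = c^* *: adj A.
Proof. by apply/matrixP=> i j; rewrite /adj !mxE rmorphM. Qed.

Definition nrm (x : vec) : algC := \sum_i `|x i 0| ^+ 2.
Lemma nrmE (x : vec) : adj x *m x = (nrm x)%:M.
Proof.
apply/matrixP=> i j; rewrite !ord1 !mxE /nrm /=.
by apply: eq_bigr => k _; rewrite /adj !mxE normCK mulrC.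
Qed.
Lemma nrm_conj x : (nrm x)^* = nrm x.
Proof.
rewrite /nrm rmorph_sum; apply: eq_bigr => k _; rewrite rmorphXn.
by congr (_ ^+ 2); exact: conj_normC.
Qed.

Lemma nrm_mul (A : 'M[algC]_8) x : adj A *m A = 1%:M -> nrm (A *m x) = nrm x.
Proof.
move=> HA; have := nrmE (A *m x); rewrite adj_mul mulmxA -(mulmxA (adj x)) HA mulmx1 nrmE.
by move/matrixP/(_ 0 0); rewrite !mxE /=.
Qed.
Lemma nrmN x : nrm (- x) = nrm x.
Proof. by rewrite /nrm; apply: eq_bigr => k _; rewrite mxE normrN. Qed.

Lemma Pproj_N x : Pproj (- x) = Pproj x.
Proof.
rewrite /Pproj adjN mulNmx mulmxN opprK.
by congr (_^-1 *: _); apply: (nrmN x).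
Qed.
Lemma Pproj_pm x y : pm x y -> Pproj x = Pproj y.
Proof. by case=> ->; rewrite ?Pproj_N. Qed.

Lemma Pproj_nrm x : Pproj x = (nrm x)^-1 *: (x *m adj x).
Proof. by []. Qed.

Lemma Pproj_mul (A : 'M[algC]_8) x : adj A *m A = 1%:M ->
  Pproj (A *m x) = A *m Pproj x *m adj A.
Proof.
move=> HA; rewrite !Pproj_nrm nrm_mul // adj_mul.
by rewrite -scalemxAr -scalemxAl !mulmxA.
Qed.

Lemma Pproj_proj x : nrm x != 0 -> is_projection (Pproj x).
Proof.
move=> nz; rewrite /is_projection !Pproj_nrm; split.
  rewrite adjZ adj_mul adjK fmorphV.
  by congr (_^-1 *: _); exact: nrm_conj.
have E c (P Q : 'M[algC]_8) : (c *: P) *m (c *: Q) = (c * c) *: (P *m Q).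
  by rewrite -scalemxAl -scalemxAr scalerA.

rewrite E mulmxA -(mulmxA x) nrmE mul_mx_scalar.
rewrite -scalemxAl scalerA; congr (_ *: _).
by rewrite -mulrA mulVf // mulr1.
Qed.

Lemma Pproj_tr x : nrm x != 0 -> \tr (Pproj x) = 1.
Proof.
move=> nz; rewrite Pproj_nrm mxtraceZ mxtrace_mulC nrmE mxtrace_scalar mulr1n.
by rewrite mulVf.
Qed.


Definition sumT (g : tcode -> int) : int := foldr (fun t a => g t + a) 0 tlist.
Lemma big_foldr_gen (T : Type) (s : seq T) (g : T -> int) :
  \sum_(k <- s) g k = foldr (fun k a => g k + a) 0 s.
Proof. by elim: s => [|x s IH]; rewrite ?big_nil ?big_cons ?IH. Qed.
Lemma sum_tc (g : tcode -> int) : \sum_(t : tcode) ((g t)%:~R : algC) = (sumT g)%:~R.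
Proof. by rewrite sum_tcode /sumT -big_foldr_gen rmorph_sum. Qed.

Definition chk_tw : bool := all (fun i => all (fun j => all (fun k => all (fun l =>
  sumT (fun t => LZn t i k * LZn t j l) == (if (i == j) && (k == l) then 8 else 0))
  (iota 0 8)) (iota 0 8)) (iota 0 8)) (iota 0 8).
Lemma chk_tw_ok : chk_tw. Proof. by vm_compute. Qed.

Lemma tw_inner (i j k l : 'I_8) (a : algC) :
  \sum_(t : tcode) (Lmat t i k * a * Lmat t j l) = a * (if (i == j) && (k == l) then 8 else 0).
Proof.
transitivity (\sum_(t : tcode) a * (LZn t i k * LZn t j l)%:~R).
  by apply: eq_bigr => t _; rewrite !Lmat_E mulrAC mulrC -rmorphM.
rewrite -mulr_sumr (sum_tc (fun t => LZn t i k * LZn t j l)).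
have := chk_tw_ok; move/allP/(_ i (imem i))/allP/(_ j (imem j))/allP/(_ k (imem k))/allP/(_ l (imem l))/eqP ->.
by case: ifP.
Qed.

Lemma twirl (A : 'M[algC]_8) :
  \sum_(t : tcode) (Lmat t *m A *m adj (Lmat t)) = (8 * \tr A) *: 1%:M.
Proof.
apply/matrixP=> i j; rewrite summxE.
under eq_bigr => t _ do (rewrite adj_Lmat mxE; under eq_bigr => l _ do rewrite [(_^T) _ _]mxE mxE big_distrl /=).
rewrite exchange_big /=.
under eq_bigr => l _ do rewrite exchange_big /=.
under eq_bigr => l _ do (under eq_bigr => k _ do rewrite tw_inner).
rewrite !mxE.
have [e|ne] := eqVneq i j; last first.
  have ne' : ((i : nat) == j) = false by apply/negbTE.
  rewrite ?ne' ?(negbTE ne) /= mulr0 big1 // => l _; rewrite big1 // => k _; by rewrite mulr0.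
subst j; rewrite /= mulr1 /mxtrace mulr_sumr; apply: eq_bigr => l _.
rewrite (bigD1 l) //= eqxx big1 ?addr0; first by rewrite mulrC.
by move=> k /negbTE ->; rewrite mulr0.
Qed.


Definition sgnZ (b : bool) : int := (-1) ^+ b.
Lemma sgnZ_R b : ((sgnZ b)%:~R : algC) = sgn b.
Proof. by case: b; rewrite /sgnZ /sgn /= ?expr1 ?expr0 ?rmorphN1 ?rmorph1. Qed.

Fixpoint cube (T : Type) (S : seq T) (n : nat) : seq (seq T) :=
  if n is n'.+1 then [seq x :: r | x <- S, r <- @cube T S n'] else [:: [::]].
Arguments cube {T}.
Lemma cube_mem (T : eqType) (S : seq T) l : all (mem S) l -> l \in cube S (size l).
Proof.
elim: l => [|x l IH] /=; first by rewrite inE.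
case/andP=> xS /IH lS; apply/allpairsP; by exists (x, l).
Qed.

Definition mk2 (i j : nat) (a b : int) : seq int :=
  mkseq (fun k => (if k == i then a else 0) + (if k == j then b else 0)) 8.
Definition prodZ (l : seq int) : int := foldr (fun a b => a * b) 1 l.
Definition type1 (l : seq int) : bool :=
  let i := find (fun z : int => z != 0) l in
  let j := (i + (find (fun z : int => z != 0) (drop i.+1 l)).+1)%N in
  (i < j)%N && (j < 8)%N && (nth 0 l i \in [:: 1; -1]) && (nth 0 l j \in [:: 1; -1])
  && (l == mk2 i j (nth 0 l i) (nth 0 l j)).
Definition Sset : seq int := [:: 0; 1; -1].
Definition isRootZ (l : seq int) : bool :=
  (size l == 8%N) && all (mem Sset) l &&
  (type1 l || (all (fun z => z != 0) l && (prodZ l == 1))).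
Definition RootList := filter isRootZ (cube Sset 8).

Definition vecZ (l : seq int) : vec := \col_k (nth 0 l k)%:~R.

Lemma vec_mk2 (I J : 'I_8) (a b : int) :
  vecZ (mk2 I J a b) = a%:~R *: e8 I + b%:~R *: e8 J.
Proof.
apply/matrixP=> k c; rewrite !ord1 /vecZ /e8 !mxE nth_mkseq //= rmorphD.
have -> : ((k : nat) == I) = (k == I) by [].
have -> : ((k : nat) == J) = (k == J) by [].
by case: (k == I); case: (k == J); rewrite /= ?mulr1 ?mulr0 ?rmorph0.
Qed.

Lemma vec_sgn2 (I J : 'I_8) b1 b2 :
  vecZ (mk2 I J (sgnZ b1) (sgnZ b2)) = sgn b1 *: e8 I + sgn b2 *: e8 J.
Proof. by rewrite vec_mk2 !sgnZ_R. Qed.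

Lemma psi_mem1 (I J : 'I_8) b1 b2 : (I < J)%N ->
  sgn b1 *: e8 I + sgn b2 *: e8 J \in Psi_E8.
Proof.
move=> lt; rewrite mem_cat; apply/orP; left; apply/allpairsP.
by exists ((I, J), (b1, b2)); rewrite /= mem_filter /= lt !mem_enum.
Qed.

Lemma psi_mem2 (f : {ffun 'I_8 -> bool}) : \prod_k sgn (f k) = 1 ->
  \col_k sgn (f k) \in Psi_E8.
Proof.
move=> h; rewrite mem_cat; apply/orP; right; apply/map_f.
by rewrite mem_filter mem_enum h eqxx.
Qed.

Lemma prodZ_big (l : seq int) : prodZ l = \prod_(x <- l) x.
Proof. by elim: l => [|x l IH]; rewrite ?big_nil ?big_cons //= IH. Qed.

Lemma prodZ_nth (l : seq int) : size l = 8%N -> \prod_(k < 8) nth 0 l k = prodZ l.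
Proof.
move=> sz; by rewrite prodZ_big [RHS](big_nth 0) sz big_mkord.
Qed.


Lemma sg_pm (z : int) : z \in [:: 1; -1] -> z = sgnZ (z == -1).
Proof. by rewrite !inE => /orP[]/eqP->. Qed.

Lemma intr_inj_C : injective (fun z : int => (z%:~R : algC)).
Proof. by move=> a b /eqP; rewrite eqr_int => /eqP. Qed.

Lemma root_of l : isRootZ l -> vecZ l \in Psi_E8.
Proof.
case/andP => /andP [/eqP sz allS] /orP [T1 | /andP [nz /eqP pr]].
  move: T1; rewrite /type1.
  set i := find _ l; set j := (i + _)%N.
  case/andP=> /andP[/andP[/andP[lij lj8] ni] nj] /eqP E.
  have li8 : (i < 8)%N by apply: ltn_trans lij lj8.
  rewrite E (sg_pm _ ni) (sg_pm _ nj).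
  rewrite -[i]/(nat_of_ord (Ordinal li8)) -[j]/(nat_of_ord (Ordinal lj8)) vec_sgn2.
  exact: psi_mem1.
pose f := [ffun k : 'I_8 => nth 0 l k == -1].
have Hk (k : 'I_8) : nth 0 l k = sgnZ (f k).
  rewrite ffunE; apply: sg_pm.
  have kl : (k < size l)%N by rewrite sz.
  have h1 : nth 0 l k \in Sset := allP allS _ (mem_nth 0 kl).
  have h2 : nth 0 l k != 0 := allP nz _ (mem_nth 0 kl).
  by move: h1 h2; rewrite !inE => /or3P [/eqP->|/eqP->|/eqP->].
have -> : vecZ l = \col_k sgn (f k).
  by apply/matrixP=> k c; rewrite !mxE Hk sgnZ_R.
apply: psi_mem2.
transitivity (\prod_(k < 8) ((nth 0 l k)%:~R : algC)).
  by apply: eq_bigr => k _; rewrite Hk sgnZ_R.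
by rewrite -rmorph_prod prodZ_nth // pr.
Qed.


Definition chk_mk2 : bool := all (fun i => all (fun j => all (fun b1 => all (fun b2 =>
  (i < j)%N ==> isRootZ (mk2 i j (sgnZ b1) (sgnZ b2))) [:: false; true]) [:: false; true])
  (iota 0 8)) (iota 0 8).
Lemma chk_mk2_ok : chk_mk2. Proof. by vm_compute. Qed.

Lemma bmem (b : bool) : b \in [:: false; true]. Proof. by case: b. Qed.

Lemma root_in l : isRootZ l -> l \in RootList.
Proof.
move=> r; rewrite mem_filter r /=.
case/andP: r => /andP [/eqP sz allS] _.
by have := @cube_mem _ Sset l allS; rewrite sz.
Qed.

Lemma root_repr x : x \in Psi_E8 -> exists2 l, isRootZ l & x = vecZ l.
Proof.
rewrite mem_cat => /orP [/allpairsP [[[I J] [b1 b2]] [/= pIJ _ ->]] | /mapP [f pf ->]].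
  rewrite mem_filter /= in pIJ; case/andP: pIJ => lt _.
  exists (mk2 I J (sgnZ b1) (sgnZ b2)); last by rewrite vec_sgn2.
  have := chk_mk2_ok; move/allP/(_ I (imem I))/allP/(_ J (imem J))/allP/(_ b1 (bmem b1)).
  by move/allP/(_ b2 (bmem b2)); rewrite lt.
rewrite mem_filter in pf; case/andP: pf => /eqP pf _.
exists (mkseq (fun k => sgnZ (f (inord k))) 8); last first.
  by apply/matrixP=> k c; rewrite !mxE nth_mkseq // inord_val sgnZ_R.
have aS : all (mem Sset) (mkseq (fun k => sgnZ (f (inord k))) 8).
  by apply/allP=> z /mapP [k _ ->]; case: (f _).
rewrite /isRootZ size_mkseq eqxx aS !andTb; apply/orP; right; apply/andP; split.
  by apply/allP=> z /mapP [k _ ->]; case: (f _).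
rewrite -prodZ_nth ?size_mkseq //.
apply/eqP/intr_inj_C; rewrite /= rmorph_prod rmorph1.
transitivity (\prod_(k < 8) sgn (f k)); last exact: pf.
apply: eq_bigr => k _.
by rewrite nth_mkseq // inord_val; exact: sgnZ_R.
Qed.


Definition actZ (t : tcode) (l : seq int) : seq int :=
  mkseq (fun i => sum8 (fun k => LZn t i k * nth 0 l k)) 8.

Lemma Lmat_vecZ t l : Lmat t *m vecZ l = vecZ (actZ t l).
Proof.
apply/matrixP=> i c; rewrite mxE /vecZ [RHS]mxE nth_mkseq //.
under eq_bigr => k _ do rewrite Lmat_E mxE -rmorphM.
by rewrite (sum_ord8 (fun k => LZn t i k * nth 0 l k)).
Qed.

Lemma vecZ_inj l1 l2 : size l1 = 8%N -> size l2 = 8%N -> vecZ l1 = vecZ l2 -> l1 = l2.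
Proof.
move=> s1 s2 /matrixP E; apply: (@eq_from_nth _ 0); first by rewrite s1 s2.
move=> i; rewrite s1 => lt; have := E (Ordinal lt) 0; rewrite !mxE; exact: intr_inj_C.
Qed.

Lemma vecZN l : - vecZ l = vecZ (map (fun z => - z) l).
Proof.
apply/matrixP=> i c; rewrite !mxE.
case: (ltnP i (size l)) => lt; first by rewrite (nth_map 0) // rmorphN.
by rewrite !nth_default ?size_map // rmorph0 oppr0.
Qed.

Definition pmb (a b : seq int) := (a == b) || (a == map (fun z => - z) b).
Definition pmB (x y : vec) := (x == y) || (x == - y).
Lemma pmP x y : reflect (pm x y) (pmB x y).
Proof. by apply: (iffP orP) => [][/eqP|/eqP]; [left|right|move->; left|move->; right]. Qed.

Lemma pm_vecZ l1 l2 : size l1 = 8%N -> size l2 = 8%N ->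
  pmB (vecZ l1) (vecZ l2) = pmb l1 l2.
Proof.
move=> s1 s2; rewrite /pmB /pmb vecZN.
have s3 : size (map (fun z => - z) l2) = 8%N by rewrite size_map.
congr (_ || _); apply/eqP/eqP => [|->] //; exact: vecZ_inj.
Qed.

Definition checkRoot (l : seq int) : bool :=
  let V := [seq actZ t l | t <- tlist] in
  all isRootZ V && all (fun v => count (pmb^~ v) V == 8%N) V &&
  (sum8 (fun k => nth 0 l k * nth 0 l k) != 0).
Lemma checkRoot_ok : all checkRoot RootList.
Proof. by vm_compute. Qed.

Lemma root_facts (y : vec) : y \in Psi_E8 ->
  exists2 l, (checkRoot l /\ size l = 8%N) & y = vecZ l.
Proof.
case/root_repr=> l r ->; exists l => //; split.
  by move/allP: checkRoot_ok; apply; exact: root_in.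
by case/andP: r => /andP [/eqP] .
Qed.

Lemma Lmat_root t y : y \in Psi_E8 -> Lmat t *m y \in Psi_E8.
Proof.
case/root_facts=> l [/andP [/andP [/allP R _] _] _] ->.
rewrite Lmat_vecZ; apply: root_of; apply: R; apply/mapP; exists t => //; exact: tmem.
Qed.

Lemma nrm_root y : y \in Psi_E8 -> nrm y != 0.
Proof.
case/root_facts=> l [/andP [_ nz] _] ->.
have -> : nrm (vecZ l) = (sum8 (fun k => nth 0 l k * nth 0 l k))%:~R.
  rewrite -sum_ord8 /nrm; apply: eq_bigr => k _.
  by rewrite mxE normCK conj_int -rmorphM.
by rewrite intr_eq0.
Qed.

Lemma count_root y t0 : y \in Psi_E8 ->
  #|[pred t : tcode | pmB (Lmat t *m y) (Lmat t0 *m y)]| = 8%N.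
Proof.
case/root_facts=> l [/andP [/andP [_ /allP C] _] sz] ->.
rewrite card_tcode.
have -> : count [pred t : tcode | pmB (Lmat t *m vecZ l) (Lmat t0 *m vecZ l)] tlist
        = count (pmb^~ (actZ t0 l)) [seq actZ t l | t <- tlist].
  rewrite count_map; apply: eq_count => t /=.
  by rewrite !Lmat_vecZ pm_vecZ ?size_mkseq.
apply/eqP/C; apply/mapP; exists t0 => //; exact: tmem.
Qed.


Arguments pm_sym {x y} _.
Arguments pm_trans {x y z} _ _.
Arguments pm_mul A {x y} _.

Lemma vtx_eq (y z : e8root) : vtx y = vtx z <-> pm (val y) (val z).
Proof.
split.
  move/(congr1 val) => /= E.
  have : z \in vset z by rewrite inE eqxx.
  rewrite -E inE => /orP [/eqP e|/eqP e]; apply: pm_sym; [left|right]; exact: e.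
move=> H; apply: val_inj => /=; apply/setP => x; rewrite !inE.
case: H => ->; first by [].
by rewrite opprK orbC.
Qed.

Lemma vertex_rep (a : vertex) : exists y, a = vtx y.
Proof.
case: a => A p; have := p; move/existsP=> [x /eqP E].
by exists x; apply: val_inj => /=.
Qed.

Definition rootL (t : tcode) (y : e8root) : e8root :=
  SeqSub (Lmat_root t (val y) (valP y)).

Definition Pv (b : vertex) : 'M[algC]_8 :=
  match [pick x in val b] with Some x => Pproj (val x) | None => 0 end.

Lemma Pv_vtx z : Pv (vtx z) = Pproj (val z).
Proof.
rewrite /Pv; case: pickP => [x|].
  rewrite /= inE => /orP [/eqP e|/eqP e]; apply: Pproj_pm; [left|right]; exact: e.
by move/(_ z); rewrite /= inE eqxx.
Qed.

Definition sob (a b : vertex) : bool :=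
  if excluded_middle_informative (same_orbit a b) then true else false.
Lemma sobP a b : reflect (same_orbit a b) (sob a b).
Proof. by rewrite /sob; case: excluded_middle_informative => h; constructor. Qed.

Lemma so_char y b : same_orbit (vtx y) b <-> exists t, b = vtx (rootL t y).
Proof.
split.
  move=> [t [y' [z [Ey' [Ez H]]]]]; exists t; rewrite -Ez; apply/vtx_eq.
  have H' : pm (Lmat t *m val y') (val z) := H.
  have e : pm (val y) (val y') by apply/vtx_eq; rewrite Ey'.
  exact: pm_sym (pm_trans (pm_mul (Lmat t) e) H').
move=> [t ->]; exists t, y, (rootL t y); do 2!split => //; by left.
Qed.

Lemma so_sym a b : same_orbit a b -> same_orbit b a.
Proof.
move=> [t [y [z [Ey [Ez H]]]]]; exists t, z, y; do 2!split => //.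
have H' : pm (Lmat t *m val y) (val z) := H.
apply: pm_trans (Lmat_sqv t (val y)).
exact/pm_mul/pm_sym.
Qed.


Lemma sum_orbit (y : e8root) : \sum_(b | sob (vtx y) b) Pv b = 1%:M.
Proof.
have T := twirl (Pproj (val y)).
rewrite Pproj_tr ?nrm_root ?(valP y) // mulr1 in T.
have E : \sum_(t : tcode) (Lmat t *m Pproj (val y) *m adj (Lmat t))
       = \sum_(t : tcode) Pv (vtx (rootL t y)).
  by apply: eq_bigr => t _; rewrite Pv_vtx /= Pproj_mul // Lmat_tK.
rewrite E (partition_big (fun t => vtx (rootL t y)) predT) //= in T.
have C b : \sum_(t | vtx (rootL t y) == b) Pv (vtx (rootL t y))
          = if sob (vtx y) b then Pv b *+ 8 else 0.
  transitivity (\sum_(t in [pred t | vtx (rootL t y) == b]) Pv b).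
    by apply: eq_big => // t /eqP ->.
  rewrite sumr_const; case: (sobP (vtx y) b) => h.
    have [t0 ->] := (so_char y b).1 h.
    congr (_ *+ _).
    transitivity #|[pred t : tcode | pmB (Lmat t *m val y) (Lmat t0 *m val y)]|;
      last exact: (count_root (val y) t0 (valP y)).
    apply: eq_card => t; rewrite !inE; apply/eqP/pmP; [exact: (vtx_eq (rootL t y) (rootL t0 y)).1 | exact: (vtx_eq (rootL t y) (rootL t0 y)).2].
  rewrite (_ : #|_| = 0%N) ?mulr0n //; apply: eq_card0 => t; rewrite !inE.
  by apply/negP => /eqP E'; apply: h; apply/so_char; exists t.
have {}T : \sum_b (if sob (vtx y) b then Pv b *+ 8 else 0) = 8 *: 1%:M.
  by rewrite -T; apply: eq_bigr => b _; rewrite C.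
rewrite -big_mkcond sumrMnl -scaler_nat in T.
by apply: (scalerI (a := 8%:R)) => //; rewrite pnatr_eq0.
Qed.


Theorem lemma3p5
  (w : vertex -> e8root)
  (hw_in : forall a : vertex, same_orbit a (vtx (w a)))
  (hw_const : forall a b : vertex, same_orbit a b -> w a = w b)
  (Mc : vertex -> vertex -> (pauli * pauli * pauli)%type)
  (hMc : forall a b : vertex, same_orbit a b -> Lmaps (Mc a b) a b)
  (u : vertex -> vertex -> 'M[algC]_8)
  (hu_in : forall a b : vertex, same_orbit a b ->
     u a b = Lmat (Mc a b) *m Pproj (val (w a)) *m adj (Lmat (Mc a b)))
  (hu_out : forall a b : vertex, ~ same_orbit a b -> u a b = 0) :
  magic_unitary u.
Proof.
have proj0 : is_projection 0.
  split; last by rewrite mul0mx.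
  by apply/matrixP=> i j; rewrite /adj !mxE rmorph0.
have uE a b (h : same_orbit a b) : u a b = Pproj (Lmat (Mc a b) *m val (w a)).
  by rewrite hu_in // Pproj_mul // Lmat_tK.
split.
  move=> a b; case: (sobP a b) => h; last by rewrite hu_out.
  rewrite uE //; apply: Pproj_proj; rewrite nrm_mul ?Lmat_tK //.
  exact: nrm_root (valP _).
split.
- move=> a.
  have [t0 [y0 [z0 [Ey0 [Ez0 H0]]]]] := hw_in a.
  have H0' : pm (Lmat t0 *m val y0) (val z0) := H0.
  have e0 : pm (val z0) (val (w a)) by apply/vtx_eq.
  have key b : sob a b -> u a b = Lmat t0 *m Pv b *m adj (Lmat t0).
    move/sobP=> h; rewrite uE //.
    have [y [z [Ey [Ez H]]]] := hMc a b h.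
    have H' : pm (Lmat (Mc a b) *m val y) (val z) := H.
    have e1 : pm (val y) (val y0) by apply/vtx_eq; rewrite Ey Ey0.
    have P1 : pm (Lmat (Mc a b) *m val (w a)) (Lmat t0 *m val z).
      apply: pm_trans (pm_mul (Lmat (Mc a b)) (pm_sym (pm_trans H0' e0))) _.
      apply: pm_trans (Lmat_commv _ _ _) _.
      apply: pm_mul; exact: pm_trans (pm_mul (Lmat (Mc a b)) (pm_sym e1)) H'.
    by rewrite (Pproj_pm _ _ P1) Pproj_mul ?Lmat_tK // -Ez Pv_vtx.
  rewrite (eq_bigr (fun b => if sob a b then Lmat t0 *m Pv b *m adj (Lmat t0) else 0)); last first.
    move=> b _; case: ifP => h; first by rewrite key.
    by rewrite hu_out // => /sobP; rewrite h.
  by rewrite -big_mkcond -mulmx_suml -mulmx_sumr -Ey0 sum_orbit mulmx1 Lmat_Kt.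
- move=> b.
  have [t1 [y1 [z1 [Ey1 [Ez1 H1]]]]] := hw_in b.
  have H1' : pm (Lmat t1 *m val y1) (val z1) := H1.
  have e0 : pm (val z1) (val (w b)) by apply/vtx_eq.
  have key a : sob a b -> u a b = Lmat t1 *m Pv a *m adj (Lmat t1).
    move/sobP=> h; rewrite uE // (hw_const a b h).
    have [y [z [Ey [Ez H]]]] := hMc a b h.
    have H' : pm (Lmat (Mc a b) *m val y) (val z) := H.
    have e1 : pm (val z) (val y1) by apply/vtx_eq; rewrite Ez Ey1.
    have P1 : pm (Lmat (Mc a b) *m val (w b)) (Lmat t1 *m val y).
      apply: pm_trans (pm_mul (Lmat (Mc a b)) (pm_sym (pm_trans H1' e0))) _.
      apply: pm_trans (Lmat_commv _ _ _) _.
      apply: pm_mul.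
      apply: pm_trans (pm_mul (Lmat (Mc a b)) (pm_sym e1)) _.
      exact: pm_trans (pm_mul (Lmat (Mc a b)) (pm_sym H')) (Lmat_sqv _ _).
    by rewrite (Pproj_pm _ _ P1) Pproj_mul ?Lmat_tK // -Ey Pv_vtx.
  rewrite (eq_bigr (fun a => if sob a b then Lmat t1 *m Pv a *m adj (Lmat t1) else 0)); last first.
    move=> a _; case: ifP => h; first by rewrite key.
    by rewrite hu_out // => /sobP; rewrite h.
  rewrite -big_mkcond -mulmx_suml -mulmx_sumr.
  rewrite (eq_bigl (fun a => sob b a)); last first.
    by move=> a; apply/sobP/sobP; apply: so_sym.
  by rewrite -Ey1 sum_orbit mulmx1 Lmat_Kt.
Qed.
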